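(* Let $m,d$ be integers with $3\leq m<d$. Let $\mathcal{H}_A=\mathbb{C}^m\otimes\mathbb{C}^d$ and $\mathcal{H}_B=\mathbb{C}^m\otimes\mathbb{C}^d$. Let $F_m$ denote the swap of Alice's and Bob's $\mathbb{C}^m$ factors and $F_d$ the swap of Alice's and Bob's $\mathbb{C}^d$ factors, and $\mathbb{1}_m,\mathbb{1}_d$ the corresponding identities on $\mathbb{C}^m\otimes\mathbb{C}^m$ and $\mathbb{C}^d\otimes\mathbb{C}^d$. For real $\epsilon,\delta$ let $$\rho=\mathbb{1}_m\otimes\mathbb{1}_d+\frac{d\epsilon-1}{d}\,\mathbb{1}_m\otimes F_d+\frac{m\epsilon-1}{m}\,F_m\otimes\mathbb{1}_d+\frac{1-(m+d)\epsilon+dm\delta}{dm}\,F_m\otimes F_d,$$ and assume $\rho$ is positive semidefinite. If $$\epsilon m^2(d^2-1)+dm\delta(m-d)<0,$$ then $\rho$ is entangled, i.e. not a nonnegative combination of product operators $\rho^A\otimes\rho^B$ with $\rho^A\geq0$ on $\mathcal{H}_A$ and $\rho^B\geq 0$ on $\mathcal{H}_B$.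
   Context: A swap operator on $\mathbb{C}^k\otimes\mathbb{C}^k$ is $\sum_{i,j}|ij\rangle\langle ji|$; here $F_m$ and $F_d$ act on the pair of $\mathbb{C}^m$ factors and the pair of $\mathbb{C}^d$ factors respectively (one factor of each pair belonging to Alice and one to Bob), and the tensor products above are with respect to this regrouping of $\mathcal{H}_A\otimes\mathcal{H}_B$. *)

(* Defs.v *)
From HB Require Import structures.
From mathcomp Require Import all_boot all_order all_algebra all_field.
From mathcomp Require Import mxtens.
Set Implicit Arguments. Unset Strict Implicit. Unset Printing Implicit Defensive.
Import Order.TTheory GRing.Theory Num.Theory.
Local Open Scope ring_scope.

(* The complex field is an arbitrary numClosedFieldType C (e.g. R[i] for
   the real numbers R); its real elements play the role of the reals. *)

Definition psdmx (C : numClosedFieldType) (n : nat) (M : 'M[C]_n) : Prop :=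
  M = (map_mx Num.conj M)^T /\
  forall v : 'rV[C]_n, 0 <= (v *m M *m (map_mx Num.conj v)^T) 0 0.

Definition kd {C : numClosedFieldType} {T : eqType} (x y : T) : C := (x == y)%:R.

(* Basis of H_A = C^m (x) C^d (and H_B) indexed by mxtens_index (a, i),
   a : 'I_m, i : 'I_d.  Basis of H_A (x) H_B indexed by
   mxtens_index (x, y), x the index of Alice, y the index of Bob; this is
   the convention of the Kronecker product [*t] of mxtens.

   rho_mx m d eps delta is the operator
     1_m (x) 1_d + (d eps - 1)/d 1_m (x) F_d + (m eps - 1)/m F_m (x) 1_d
       + (1 - (m+d) eps + d m delta)/(d m) F_m (x) F_d
   where the tensor factors are regrouped as (C^m (x) C^m) (x) (C^d (x) C^d):
   matrix entry <a i, b j | . | a' i', b' j'>  (Alice (a,i), Bob (b,j)). *)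
Definition rho_mx (C : numClosedFieldType) (m d : nat) (eps delta : C) : 'M[C]_(m * d * (m * d)) :=
  \matrix_(r, c)
    let a := (mxtens_unindex (mxtens_unindex r).1).1 in
    let i := (mxtens_unindex (mxtens_unindex r).1).2 in
    let b := (mxtens_unindex (mxtens_unindex r).2).1 in
    let j := (mxtens_unindex (mxtens_unindex r).2).2 in
    let a' := (mxtens_unindex (mxtens_unindex c).1).1 in
    let i' := (mxtens_unindex (mxtens_unindex c).1).2 in
    let b' := (mxtens_unindex (mxtens_unindex c).2).1 in
    let j' := (mxtens_unindex (mxtens_unindex c).2).2 in
    let idm := kd a a' * kd b b' in
    let Fm  := kd a b' * kd b a' in
    let idd := kd i i' * kd j j' in
    let Fd  := kd i j' * kd j i' in
    idm * idd
    + ((d%:R * eps - 1) / d%:R) * (idm * Fd)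
    + ((m%:R * eps - 1) / m%:R) * (Fm * idd)
    + ((1 - (m + d)%:R * eps + d%:R * m%:R * delta) / (d%:R * m%:R)) * (Fm * Fd).

Definition separable (C : numClosedFieldType) (p : nat) (M : 'M[C]_(p * p)) : Prop :=
  exists (N : nat) (c : 'I_N -> C) (A B : 'I_N -> 'M[C]_p),
    (forall k, 0 <= c k /\ psdmx (A k) /\ psdmx (B k)) /\
    M = \sum_(k < N) c k *: (A k *t B k).

Definition entangled (C : numClosedFieldType) (p : nat) (M : 'M[C]_(p * p)) : Prop := ~ separable M.

(* Main.v *)
Require Import Defs.
From HB Require Import structures.
From mathcomp Require Import all_boot all_order all_algebra all_field.
From mathcomp Require Import mxtens.
From mathcomp Require Import ring.
Set Implicit Arguments. Unset Strict Implicit. Unset Printing Implicit Defensive.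
Import Order.TTheory GRing.Theory Num.Theory.
Local Open Scope ring_scope.

Section Aux.
Variable C : numClosedFieldType.

Lemma CS (n:nat) (x y : 'I_n -> C) :
  (\sum_k x k * (y k)^*) * (\sum_k x k * (y k)^*)^* <=
  (\sum_k x k * (x k)^*) * (\sum_k y k * (y k)^*).
Proof.
pose u : 'rV[C]_n := \row_k x k. pose v : 'rV[C]_n := \row_k y k.
have := (CauchySchwarz (@dotmx C n) u v).1.
rewrite normCK.
have E : forall (w z : 'I_n -> C), @dotmx C n (\row_k w k) (\row_k z k) = \sum_k w k * (z k)^*.
  by move=> w z; rewrite dotmxE !mxE; apply: eq_bigr => k _; rewrite !mxE.
by rewrite -!E.
Qed.

Lemma core (m d : nat) (R S : 'M[C]_(m,d)) : (m <= d)%N ->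
  (\sum_a \sum_i R a i * (S a i)^*) * (\sum_a \sum_i R a i * (S a i)^*)^*
  <= m%:R * \sum_i \sum_j (\sum_a R a i * (S a j)^*) * (\sum_a R a i * (S a j)^*)^*.
Proof.
move=> lemd.
set U := schmidt R.
have Uu : forall a b, \sum_i U a i * (U b i)^* = (a == b)%:R.
  move=> a b; have /unitarymxP /matrixP /(_ a b) := schmidt_unitarymx R lemd.
  rewrite !mxE => <-; apply: eq_bigr => i _; rewrite !mxE.
  done.
have /submxP [L RLU] := schmidt_sub R.
pose K c j := \sum_a L a c * (S a j)^*.
have H1 : forall i j, \sum_a R a i * (S a j)^* = \sum_c U c i * K c j.
  move=> i j; rewrite RLU.
  under eq_bigr => a _ do rewrite mxE mulr_suml.
  rewrite exchange_big /=; apply: eq_bigr => c _.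
  rewrite /K mulr_sumr; apply: eq_bigr => a _; ring.
have H2 : \sum_a \sum_i R a i * (S a i)^* = \sum_c \sum_i U c i * K c i.
  rewrite exchange_big /=.
  under eq_bigr => i _ do rewrite H1.
  by rewrite exchange_big.
have H3 : \sum_i \sum_j (\sum_a R a i * (S a j)^*) * (\sum_a R a i * (S a j)^*)^*
          = \sum_c \sum_j K c j * (K c j)^*.
  under eq_bigr => i _ do under eq_bigr => j _ do rewrite H1 rmorph_sum mulr_suml.
  under eq_bigr => i _ do under eq_bigr => j _ do under eq_bigr => c _ do
    rewrite mulr_sumr.
  rewrite exchange_big /=.
  under eq_bigr => j _ do rewrite exchange_big /=.
  under eq_bigr => j _ do under eq_bigr => c _ do rewrite exchange_big /=.
  under eq_bigr => j _ do under eq_bigr => c _ do under eq_bigr => c' _ do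
    (rewrite (eq_bigr (fun i => K c j * (K c' j)^* * (U c i * (U c' i)^*)));
     last by move=> i _; rewrite rmorphM /=; ring).
  under eq_bigr => j _ do under eq_bigr => c _ do under eq_bigr => c' _ do
    rewrite -mulr_sumr Uu.
  rewrite exchange_big /=; apply: eq_bigr => c _; apply: eq_bigr => j _.
  rewrite (bigD1 c) //= eqxx mulr1 big1 ?addr0 // => c' /negPf.
  by rewrite eq_sym => ->; rewrite mulr0.
rewrite H2 H3.
apply: (le_trans (y := m%:R * \sum_c (\sum_i U c i * K c i) * (\sum_i U c i * K c i)^*)).
  have := CS (fun c => \sum_i U c i * K c i) (fun _ => 1).
  have E1 : forall (z : 'I_m -> C), \sum_c z c * (1 : C)^* = \sum_c z c.
    by move=> z; apply: eq_bigr => c _; rewrite conjC1 mulr1.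
  rewrite !E1 sumr_const card_ord.
  by rewrite [X in _ <= X -> _]mulrC.
rewrite ler_wpM2l ?ler0n //; apply: ler_sum => c _.
have := CS (fun i => U c i) (fun i => (K c i)^*).
rewrite Uu eqxx mul1r.
move=> h; have E2 : forall k, U c k * (K c k)^*^* = U c k * K c k by move=> k; rewrite conjCK.
rewrite (eq_bigr _ (fun k _ => E2 k)) in h; apply: (le_trans h); rewrite le_eqVlt; apply/orP; left; apply/eqP; apply: eq_bigr => i _; by rewrite conjCK mulrC.
Qed.


Lemma psd_decomp n (A : 'M[C]_n) : psdmx A -> exists (P : 'M[C]_n) (lam : 'I_n -> C),
  (forall k, 0 <= lam k) /\ forall x y, A x y = \sum_k lam k * ((P k x)^* * P k y).
Proof.
case=> Ah Apos.
have An : A \is normalmx.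
  apply/normalmxP; rewrite -map_trmx -Ah; done.
have := orthomx_spectralP An.
set P := spectralmx A; set sp := spectral_diag A.
move=> AE.
have Pu : P \is unitarymx by apply: spectral_unitarymx.
have Pent : forall k l, \sum_x P k x * (P l x)^* = (k == l)%:R.
  move=> k l; have /unitarymxP /matrixP /(_ k l) := Pu.
  rewrite !mxE => <-; apply: eq_bigr => i _; rewrite !mxE; done.
have Aent : forall x y, A x y = \sum_k sp 0 k * ((P k x)^* * P k y).
  move=> x y; rewrite AE invmx_unitary // mul_mx_diag !mxE.
  apply: eq_bigr => k _; rewrite !mxE; ring.
exists P, (fun k => sp 0 k); split => // k.
have := Apos (row k P).
have -> : ((row k P *m A *m (map_mx Num.conj (row k P))^T) 0 0) = sp 0 k.
  rewrite !mxE.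
  transitivity (\sum_y \sum_x \sum_l sp 0 l * ((P k x * (P l x)^*) * (P l y * (P k y)^*))).
    apply: eq_bigr => y _; rewrite !mxE mulr_suml; apply: eq_bigr => x _.
    rewrite !mxE Aent mulr_sumr mulr_suml; apply: eq_bigr => l _; ring.
  transitivity (\sum_l sp 0 l * ((\sum_x P k x * (P l x)^*) * (\sum_y P l y * (P k y)^*))).
    rewrite exchange_big /=.
    under eq_bigr => x _ do rewrite exchange_big /=.
    rewrite exchange_big /=; apply: eq_bigr => l _.
    rewrite big_distrlr mulr_sumr /=; apply: eq_bigr => y _.
    rewrite mulr_sumr; apply: eq_bigr => x _; ring.
  rewrite (bigD1 k) //= !Pent eqxx mulr1 big1 ?addr0 ?mulr1 // => l nlk.
  by rewrite !Pent eq_sym (negPf nlk) mul0r mulr0.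
done.
Qed.
End Aux.

Section W.
Variable C : numClosedFieldType.

Variables m d : nat.

Definition S4 (F : 'I_m -> 'I_m -> 'I_d -> 'I_d -> C) : C :=
  \sum_a \sum_b \sum_i \sum_j F a b i j.

Lemma S4D F G : S4 (fun a b i j => F a b i j + G a b i j) = S4 F + S4 G.
Proof.
rewrite /S4 -big_split; apply: eq_bigr => a _.
rewrite -big_split; apply: eq_bigr => b _.
rewrite -big_split; apply: eq_bigr => i _.
by rewrite -big_split.
Qed.

Lemma S4Z c F : S4 (fun a b i j => c * F a b i j) = c * S4 F.
Proof.
rewrite /S4 mulr_sumr; apply: eq_bigr => a _.
rewrite mulr_sumr; apply: eq_bigr => b _.
rewrite mulr_sumr; apply: eq_bigr => i _.
by rewrite mulr_sumr.
Qed.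

Lemma S4_sum (K : finType) (F : K -> 'I_m -> 'I_m -> 'I_d -> 'I_d -> C) :
  S4 (fun a b i j => \sum_k F k a b i j) = \sum_k S4 (F k).
Proof.
rewrite /S4.
under eq_bigr => a _ do under eq_bigr => b _ do under eq_bigr => i _ do rewrite exchange_big.
under eq_bigr => a _ do under eq_bigr => b _ do rewrite exchange_big.
under eq_bigr => a _ do rewrite exchange_big.
by rewrite exchange_big.
Qed.

Lemma S4_ext F G : (forall a b i j, F a b i j = G a b i j) -> S4 F = S4 G.
Proof.
move=> FG; rewrite /S4; apply: eq_bigr => a _; apply: eq_bigr => b _.
by apply: eq_bigr => i _; apply: eq_bigr => j _.
Qed.

Lemma S4_swap F : S4 F = \sum_i \sum_j \sum_a \sum_b F a b i j.
Proof.
rewrite /S4.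
under eq_bigr => a _ do rewrite exchange_big /=.
rewrite exchange_big /=; apply: eq_bigr => i _.
under eq_bigr => a _ do rewrite exchange_big /=.
by rewrite exchange_big.
Qed.


Lemma S4_prod (u : 'I_m -> 'I_m -> C) (v : 'I_d -> 'I_d -> C) :
  S4 (fun a b i j => u a b * v i j) = (\sum_a \sum_b u a b) * (\sum_i \sum_j v i j).
Proof.
rewrite /S4 mulr_suml; apply: eq_bigr => a _.
rewrite mulr_suml; apply: eq_bigr => b _.
rewrite mulr_sumr; apply: eq_bigr => i _.
by rewrite mulr_sumr.
Qed.

Lemma sum_kd (n : nat) (x : 'I_n) : \sum_y (kd x y : C) = 1.
Proof.
rewrite (bigD1 x) //= /kd eqxx big1 ?addr0 // => y /negPf.
by rewrite eq_sym => ->.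
Qed.

Lemma sum2_kd (n : nat) : \sum_(x < n) \sum_(y < n) (kd x y : C) = n%:R.
Proof.
rewrite (eq_bigr (fun _ => 1)); last by move=> x _; rewrite sum_kd.
by rewrite sumr_const card_ord.
Qed.

Lemma sum2_1 (n : nat) : \sum_(x < n) \sum_(y < n) (1 : C) = n%:R * n%:R.
Proof.
rewrite (eq_bigr (fun _ => n%:R)); last by move=> x _; rewrite sumr_const card_ord.
by rewrite sumr_const card_ord mulr_natr.
Qed.

Lemma S4_poly c0 c1 c2 c3 :
  S4 (fun a b i j => c0 * (kd a b * kd i j) + c1 * (kd a b * 1) + c2 * (1 * kd i j) + c3 * (1 * 1))
  = c0 * (m%:R * d%:R) + c1 * (m%:R * (d%:R * d%:R)) + c2 * (m%:R * m%:R * d%:R)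
    + c3 * (m%:R * m%:R * (d%:R * d%:R)).
Proof.
transitivity (c0 * ((\sum_(a < m) \sum_(b < m) (kd a b : C)) * (\sum_(i < d) \sum_(j < d) (kd i j : C)))
  + c1 * ((\sum_(a < m) \sum_(b < m) (kd a b : C)) * (\sum_(i < d) \sum_(j < d) (1 : C)))
  + c2 * ((\sum_(a < m) \sum_(b < m) (1 : C)) * (\sum_(i < d) \sum_(j < d) (kd i j : C)))
  + c3 * ((\sum_(a < m) \sum_(b < m) (1 : C)) * (\sum_(i < d) \sum_(j < d) (1 : C)))).
  by rewrite -!S4_prod -!S4Z -!S4D.
by rewrite !sum2_kd !sum2_1.
Qed.


Definition ix (a : 'I_m) (i : 'I_d) : 'I_(m * d) := mxtens_index (a, i).
Definition idx a i b j : 'I_(m * d * (m * d)) := mxtens_index (ix a i, ix b j).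

Definition w (N : 'M[C]_(m * d * (m * d))) : C :=
  m%:R * S4 (fun a b i j => N (idx b i a j) (idx a i b j))
  - S4 (fun a b i j => N (idx b j a i) (idx a i b j)).

Lemma w_sum n (c : 'I_n -> C) (F : 'I_n -> 'M[C]_(m * d * (m * d))) :
  w (\sum_k c k *: F k) = \sum_k c k * w (F k).
Proof.
have E : forall (g : 'I_m -> 'I_m -> 'I_d -> 'I_d -> 'I_(m * d * (m * d)))
   (h : 'I_m -> 'I_m -> 'I_d -> 'I_d -> 'I_(m * d * (m * d))),
   S4 (fun a b i j => (\sum_k c k *: F k) (g a b i j) (h a b i j))
   = \sum_k c k * S4 (fun a b i j => F k (g a b i j) (h a b i j)).
  move=> g h.
  transitivity (\sum_k S4 (fun a b i j => c k * F k (g a b i j) (h a b i j))); last first.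
    by apply: eq_bigr => k _; exact: S4Z.
  rewrite -S4_sum; apply: S4_ext => a b i j.
  by rewrite summxE; apply: eq_bigr => k _; rewrite mxE.
rewrite /w !E mulr_sumr -sumrB; apply: eq_bigr => k _; ring.
Qed.

Lemma w_tens_ge0 (A B : 'M[C]_(m * d)) : (m <= d)%N -> psdmx A -> psdmx B -> 0 <= w (A *t B).
Proof.
move=> lemd /psd_decomp [P [lam [lam0 Ae]]] /psd_decomp [Q [mu [mu0 Be]]].
pose X k l := S4 (fun a b i j => (P k (ix b i))^* * P k (ix a i) * ((Q l (ix a j))^* * Q l (ix b j))).
pose Y k l := S4 (fun a b i j => (P k (ix b j))^* * P k (ix a i) * ((Q l (ix a i))^* * Q l (ix b j))).
have E1 : S4 (fun a b i j => (A *t B) (idx b i a j) (idx a i b j)) = \sum_k \sum_l lam k * mu l * X k l.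
  transitivity (\sum_k \sum_l S4 (fun a b i j => lam k * mu l * ((P k (ix b i))^* * P k (ix a i) * ((Q l (ix a j))^* * Q l (ix b j))))); last first.
    by apply: eq_bigr => k _; apply: eq_bigr => l _; exact: S4Z.
  under eq_bigr => k _ do rewrite -S4_sum.
  rewrite -S4_sum; apply: S4_ext => a b i j.
  rewrite /idx tensmxE Ae Be big_distrlr /=; apply: eq_bigr => k _; apply: eq_bigr => l _; ring.
have E2 : S4 (fun a b i j => (A *t B) (idx b j a i) (idx a i b j)) = \sum_k \sum_l lam k * mu l * Y k l.
  transitivity (\sum_k \sum_l S4 (fun a b i j => lam k * mu l * ((P k (ix b j))^* * P k (ix a i) * ((Q l (ix a i))^* * Q l (ix b j))))); last first.
    by apply: eq_bigr => k _; apply: eq_bigr => l _; exact: S4Z.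
  under eq_bigr => k _ do rewrite -S4_sum.
  rewrite -S4_sum; apply: S4_ext => a b i j.
  rewrite /idx tensmxE Ae Be big_distrlr /=; apply: eq_bigr => k _; apply: eq_bigr => l _; ring.
rewrite /w E1 E2 mulr_sumr -sumrB; apply: sumr_ge0 => k _.
rewrite mulr_sumr -sumrB; apply: sumr_ge0 => l _.
rewrite (_ : _ - _ = lam k * mu l * (m%:R * X k l - Y k l)); last by ring.
rewrite mulr_ge0 ?mulr_ge0 // subr_ge0.
pose R : 'M[C]_(m, d) := \matrix_(a, i) P k (ix a i).
pose S : 'M[C]_(m, d) := \matrix_(a, i) Q l (ix a i).
have := core R S lemd.
have -> : Y k l = (\sum_a \sum_i R a i * (S a i)^*) * (\sum_a \sum_i R a i * (S a i)^*)^*.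
  rewrite /Y /S4 rmorph_sum big_distrlr /=; apply: eq_bigr => a _; apply: eq_bigr => b _.
  rewrite rmorph_sum big_distrlr /=; apply: eq_bigr => i _; apply: eq_bigr => j _.
  rewrite !mxE rmorphM /= conjCK; ring.
suff -> : X k l = \sum_i \sum_j (\sum_a R a i * (S a j)^*) * (\sum_a R a i * (S a j)^*)^* by [].
rewrite /X S4_swap; apply: eq_bigr => i _; apply: eq_bigr => j _.
rewrite rmorph_sum big_distrlr /=; apply: eq_bigr => a _; apply: eq_bigr => b _.
rewrite !mxE rmorphM /= conjCK; ring.
Qed.

Lemma w_rho (eps delta : C) : (0 < m)%N -> (0 < d)%N ->
  w (rho_mx m d eps delta) = m%:R * (eps * m%:R ^+ 2 * (d%:R ^+ 2 - 1) + d%:R * m%:R * delta * (m%:R - d%:R)).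
Proof.
move=> m0 d0.
set al := (d%:R * eps - 1) / d%:R.
set be := (m%:R * eps - 1) / m%:R.
set ga := (1 - (m + d)%:R * eps + d%:R * m%:R * delta) / (d%:R * m%:R).
have E1 : S4 (fun a b i j => rho_mx m d eps delta (idx b i a j) (idx a i b j)) =
  S4 (fun a b i j => al * (kd a b * kd i j) + 1 * (kd a b * 1) + ga * (1 * kd i j) + be * (1 * 1)).
  apply: S4_ext => a b i j; rewrite mxE /idx /ix !mxtens_indexK /= /kd !eqxx.
  rewrite [b == a]eq_sym [j == i]eq_sym.
  by case: (a == b); case: (i == j); rewrite /= /al /be /ga; ring.
have E2 : S4 (fun a b i j => rho_mx m d eps delta (idx b j a i) (idx a i b j)) =
  S4 (fun a b i j => 1 * (kd a b * kd i j) + al * (kd a b * 1) + be * (1 * kd i j) + ga * (1 * 1)).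
  apply: S4_ext => a b i j; rewrite mxE /idx /ix !mxtens_indexK /= /kd !eqxx.
  rewrite [b == a]eq_sym [j == i]eq_sym.
  by case: (a == b); case: (i == j); rewrite /= /al /be /ga; ring.
rewrite /w E1 E2 !S4_poly /al /be /ga.
have mn0 : m%:R != 0 :> C by rewrite pnatr_eq0 -lt0n.
have dn0 : d%:R != 0 :> C by rewrite pnatr_eq0 -lt0n.
rewrite natrD.
field.
by rewrite dn0 mn0.
Qed.

End W.

Unset Implicit Arguments.
Theorem mainTheorem6 (C : numClosedFieldType) (m d : nat) (eps delta : C) :
  (3 <= m)%N -> (m < d)%N ->
  eps \is Num.real -> delta \is Num.real ->
  psdmx (rho_mx m d eps delta) ->
  eps * m%:R ^+ 2 * (d%:R ^+ 2 - 1) + d%:R * m%:R * delta * (m%:R - d%:R) < 0 ->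
  entangled (rho_mx m d eps delta).
Proof.
move=> m3 md _ _ _ hE [N [c [A [B [hk hrho]]]]].
have m0 : (0 < m)%N by apply: leq_trans m3.
have d0 : (0 < d)%N by apply: leq_trans md.
have : 0 <= w (rho_mx m d eps delta).
  rewrite hrho w_sum; apply: sumr_ge0 => k _.
  have [c0 [hA hB]] := hk k.
  by rewrite mulr_ge0 // w_tens_ge0 // ltnW.
by rewrite w_rho // pmulr_rge0 ?ltr0n // (lt_geF hE).
Qed.
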